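(* Let $\Phi$ be a symmetric norming function such that $\mathfrak{S}_\Phi$ satisfies condition $(\ast)$ or condition $(\ast\ast)$. Then the limit \[p=\lim_{n\to\infty}\frac{\log n}{\log\|P_n\|_\Phi}\in[1,\infty]\] exists, where $P_n$ denotes any rank $n$ projection.
   Context: A symmetric norming (s.n.) function is a norm $\Phi$ on finitely supported real sequences with $\Phi(1,0,\ldots)=1$, invariant under permutations and absolute values; it extends to $c_\Phi=\{\xi\in c_0:\sup_n\Phi(\xi_1,\ldots,\xi_n,0,\ldots)<\infty\}$ by limits. $\mathfrak{S}_\Phi$ is the set of compact operators $x$ on a separable infinite-dimensional Hilbert space $H$ with singular numbers $s(x)\in c_\Phi$, normed by $\|x\|_\Phi=\Phi(s(x))$ (so $\|P_n\|_\Phi=\Phi(1,\ldots,1,0,\ldots)$ with $n$ ones). For $x,y$ on $H$, $x\otimes y$ acts on $H\otimes H$, identified with $H$. Condition $(\ast)$: there is $c_1\ge0$ with $\|x\otimes y\|_\Phi\le c_1\|x\|_\Phi\|y\|_\Phi$ for all $x,y\in\mathfrak{S}_\Phi$. Condition $(\ast\ast)$: there is $c_2>0$ with $\|x\otimes y\|_\Phi\ge c_2\|x\|_\Phi\|y\|_\Phi$ for all $x,y\in\mathfrak{S}_\Phi$. *)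

(* Defs.v *)
From Stdlib Require Cantor.
From HB Require Import structures.
From mathcomp Require Import all_boot all_order all_algebra.
From mathcomp Require Import all_classical all_reals all_analysis.
Set Implicit Arguments. Unset Strict Implicit. Unset Printing Implicit Defensive.
Import Order.TTheory GRing.Theory Num.Theory.
Import numFieldNormedType.Exports.
Local Open Scope ring_scope.
Local Open Scope classical_set_scope.

Section SN.
Variable R : realType.

Definition finsupp (x : nat -> R) : Prop :=
  exists N : nat, forall n : nat, (N <= n)%N -> x n = 0.

Definition trunc (n : nat) (x : nat -> R) : nat -> R :=
  fun k => if (k < n)%N then x k else 0.

Definition is_snf (Phi : (nat -> R) -> R) : Prop :=
  (forall x, finsupp x -> Phi x = 0 -> forall n, x n = 0) /\
  (forall (a : R) x, finsupp x -> Phi (fun n => a * x n) = `|a| * Phi x) /\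
  (forall x y, finsupp x -> finsupp y ->
      Phi (fun n => x n + y n) <= Phi x + Phi y) /\
  Phi (fun n => if n == 0%N then 1 else 0) = 1 /\
  (forall x (s : nat -> nat), finsupp x -> bijective s -> Phi (x \o s) = Phi x) /\
  (forall x, finsupp x -> Phi (fun n => `|x n|) = Phi x).

Definition in_cPhi (Phi : (nat -> R) -> R) (x : nat -> R) : Prop :=
  x @ \oo --> (0 : R) /\
  exists M : R, forall n : nat, Phi (trunc n x) <= M.

Definition Phi_ext (Phi : (nat -> R) -> R) (x : nat -> R) : R :=
  lim ((fun n => Phi (trunc n x)) @ \oo).

(* the possible singular-number sequences of elements of S_Phi:
   nonnegative, nonincreasing, in c_Phi *)
Definition snum_seq (Phi : (nat -> R) -> R) (x : nat -> R) : Prop :=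
  (forall n, 0 <= x n) /\ (forall n, x n.+1 <= x n) /\ in_cPhi Phi x.

(* singular numbers of x (x) y, enumerated via the Cantor bijection
   nat -> nat * nat (any enumeration gives the same Phi-value) *)
Definition seq_tensor (x y : nat -> R) : nat -> R :=
  fun k => x (Cantor.of_nat k).1 * y (Cantor.of_nat k).2.

Definition cond_star (Phi : (nat -> R) -> R) : Prop :=
  exists c1 : R, 0 <= c1 /\
    forall x y, snum_seq Phi x -> snum_seq Phi y ->
      in_cPhi Phi (seq_tensor x y) /\
      Phi_ext Phi (seq_tensor x y) <= c1 * Phi_ext Phi x * Phi_ext Phi y.

(* condition (star-star) (when x (x) y is not in S_Phi its norm is infinite and the
   inequality holds trivially) *)
Definition cond_star2 (Phi : (nat -> R) -> R) : Prop :=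
  exists c2 : R, 0 < c2 /\
    forall x y, snum_seq Phi x -> snum_seq Phi y ->
      in_cPhi Phi (seq_tensor x y) ->
      c2 * Phi_ext Phi x * Phi_ext Phi y <= Phi_ext Phi (seq_tensor x y).

Definition normP (Phi : (nat -> R) -> R) (n : nat) : R :=
  Phi (fun k => if (k < n)%N then 1 else 0).

Definition pratio (Phi : (nat -> R) -> R) (n : nat) : \bar R :=
  if ln (normP Phi n) == 0 then +oo%E
  else ((ln (n%:R : R)) / ln (normP Phi n))%:E.

End SN.

(* Main.v *)
Require Import Defs.
From HB Require Import structures.
From mathcomp Require Import all_boot all_order all_algebra.
From mathcomp Require Import all_classical all_reals all_analysis.
From Stdlib Require Cantor.
From mathcomp Require Import lra ring zify.
Set Implicit Arguments. Unset Strict Implicit. Unset Printing Implicit Defensive.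
Import Order.TTheory GRing.Theory Num.Theory.
Import numFieldNormedType.Exports.
Local Open Scope ring_scope.
Local Open Scope classical_set_scope.
Definition ind (R : realType) (n : nat) : nat -> R := fun k => if (k < n)%N then 1 else 0.
Definition sw (i j k : nat) : nat := if k == i then j else if k == j then i else k.
Definition ee (R : realType) (n : nat) : nat -> R := fun k => if k == n then 1 else 0.

Lemma swK i j : cancel (sw i j) (sw i j).
Proof.
move=> k; rewrite /sw.
case: (eqVneq k i) => [->|ki]; first by rewrite eqxx; case: eqVneq.
case: (eqVneq k j) => [->|kj]; first by rewrite eqxx.
by rewrite (negbTE ki) (negbTE kj).
Qed.

Lemma fs_ind (R : realType) n : finsupp (ind R n).
Proof. by exists n => k kn; rewrite /ind ltnNge kn. Qed.

Lemma fs_ee (R : realType) n : finsupp (ee R n).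
Proof. exists n.+1 => k kn; rewrite /ee; case: eqP => // e; by rewrite e ltnn in kn. Qed.

Lemma fs0 (R : realType) : finsupp (fun _ : nat => (0:R)).
Proof. by exists 0%N. Qed.

Lemma fsD (R : realType) (x y : nat -> R) : finsupp x -> finsupp y -> finsupp (fun n => x n + y n).
Proof.
move=> [N HN] [M HM]; exists (maxn N M) => k; rewrite geq_max => /andP[a b].
by rewrite HN // HM // addr0.
Qed.

Lemma ind_S (R : realType) n k : ind R n.+1 k = ind R n k + ee R n k.
Proof.
rewrite /ind /ee [(k < n.+1)%N]ltnS [(k <= n)%N]leq_eqVlt.
by case: ltngtP => //= _; rewrite ?addr0 ?add0r.
Qed.
Section P1.
Lemma Phi_cst0 (R : realType) (Phi : (nat -> R) -> R) : is_snf Phi -> Phi (fun _ => 0) = 0.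
Proof.
move=> [_ [Hhom _]].
have := Hhom 0 _ (fs0 R); rewrite normr0 mul0r.
by rewrite mul0r.
Qed.

Lemma Phi_sw (R : realType) (Phi : (nat -> R) -> R) : is_snf Phi ->
  forall x i j, finsupp x -> Phi (fun k => x (sw i j k)) = Phi x.
Proof.
move=> [_ [_ [_ [_ [Hperm _]]]]] x i j fx.
apply: (Hperm x (sw i j) fx); exists (sw i j); exact: swK.
Qed.

Lemma Phi_ee (R : realType) (Phi : (nat -> R) -> R) : is_snf Phi -> forall n, Phi (ee R n) = 1.
Proof.
move=> HP n; have [_ [_ [_ [H1 _]]]] := HP.
transitivity (Phi (ee R 0)); last exact H1.
rewrite -(Phi_sw HP 0 n (fs_ee R 0)); congr Phi; apply/funext => k.
rewrite /ee /sw; case: (eqVneq k 0) => [->|k0]; rewrite ?eqxx.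
  by rewrite eq_sym.
by case: (eqVneq k n) => [_|kn] //=; rewrite (negbTE k0).
Qed.

Lemma normP_S (R : realType) (Phi : (nat -> R) -> R) : is_snf Phi ->
  forall n, normP Phi n.+1 <= normP Phi n + 1.
Proof.
move=> HP n; have [_ [_ [Htri _]]] := HP.
rewrite -(Phi_ee HP n) /normP.
change (Phi (ind R n.+1) <= Phi (ind R n) + Phi (ee R n)).
have -> : ind R n.+1 = fun k => ind R n k + ee R n k by apply/funext => k; rewrite ind_S.
exact: Htri (fs_ind R n) (fs_ee R n).
Qed.

Lemma normP_mono1 (R : realType) (Phi : (nat -> R) -> R) : is_snf Phi ->
  forall n, normP Phi n <= normP Phi n.+1.
Proof.
move=> HP n; have [_ [Hhom [Htri [_ [_ Habs]]]]] := HP.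
pose y : nat -> R := fun k => if (k < n)%N then 1 else if k == n then -1 else 0.
have fy : finsupp y by exists n.+1 => k kn; rewrite /y ltnNge (ltnW kn); case: eqP => // e; rewrite e ltnn in kn.
have Py : Phi y = normP Phi n.+1.
  rewrite -Habs //; change (Phi (fun k => `|y k|) = Phi (ind R n.+1)); congr Phi; apply/funext => k.
  rewrite /y /ind [(k < n.+1)%N]ltnS [(k <= n)%N]leq_eqVlt.
  by case: ltngtP => //= _; rewrite ?normr1 ?normrN ?normr0 ?normr1.
have fs2 := fsD (fs_ind R n.+1) fy.
have := Hhom (2^-1) _ fs2.
have -> : (fun k => 2^-1 * (ind R n.+1 k + y k)) = ind R n.
  apply/funext => k; rewrite /y /ind [(k < n.+1)%N]ltnS [(k <= n)%N]leq_eqVlt.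
  case: ltngtP => //= _; rewrite ?subrr ?addr0 ?mulr0 //.
  by rewrite -mulr2n mulVf // pnatr_eq0.
move=> E; change (Phi (ind R n) <= normP Phi n.+1); rewrite E.
have := Htri _ _ (fs_ind R n.+1) fy; rewrite Py => h.
rewrite ger0_norm ?invr_ge0 ?ler0n //.
apply: le_trans (ler_wpM2l _ h) _; first by rewrite invr_ge0 ler0n.
have e : Phi (ind R n.+1) = normP Phi n.+1 by [].
rewrite e; lra.
Qed.
End P1.
Lemma normP_mono (R : realType) (Phi : (nat -> R) -> R) : is_snf Phi ->
  forall m n, (m <= n)%N -> normP Phi m <= normP Phi n.
Proof.
move=> HP m n /subnKC <-; elim: (n - m)%N => [|d IH]; first by rewrite addn0.
by rewrite addnS; apply: le_trans IH (normP_mono1 HP _).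
Qed.

Lemma normP0 (R : realType) (Phi : (nat -> R) -> R) : is_snf Phi -> normP Phi 0 = 0.
Proof. by move=> HP; rewrite -(Phi_cst0 HP). Qed.

Lemma normP1 (R : realType) (Phi : (nat -> R) -> R) : is_snf Phi -> normP Phi 1 = 1.
Proof.
move=> HP; have [_ [_ [_ [H1 _]]]] := HP; rewrite -H1 /normP; congr Phi.
by apply/funext => k; case: k.
Qed.

Lemma normP_ge1 (R : realType) (Phi : (nat -> R) -> R) : is_snf Phi ->
  forall n, (0 < n)%N -> 1 <= normP Phi n.
Proof. by move=> HP n n0; rewrite -(normP1 HP); apply: normP_mono. Qed.

Lemma normP_le (R : realType) (Phi : (nat -> R) -> R) : is_snf Phi ->
  forall n, normP Phi n <= n%:R.
Proof.
move=> HP; elim=> [|n IH]; first by rewrite normP0.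
by apply: le_trans (normP_S HP n) _; rewrite -natr1 lerD2r.
Qed.

Definition cnt (R : realType) (x : nat -> R) N : nat := (\sum_(i < N) (x i != 0%R))%N.
Definition is01 (R : realType) (x : nat -> R) := forall k, x k = 0 \/ x k = 1.

Lemma sum_sw (F : nat -> nat) M j N : (j < M)%N -> (N < M)%N ->
  (\sum_(i < M) F (sw j N i) = \sum_(i < M) F i)%N.
Proof.
move=> jM NM.
have hM : forall i, (i < M)%N -> (sw j N i < M)%N.
  by move=> i iM; rewrite /sw; case: ifP => _ //; case: ifP.
pose h (i : 'I_M) := Ordinal (hM i (ltn_ord i)).
have hinj : injective h.
  by move=> a b /(congr1 val) /= /(congr1 (sw j N)); rewrite !swK => /val_inj.
by rewrite [RHS](reindex_inj hinj).
Qed.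

Lemma sum1_ordn N : (\sum_(i < N) 1 = N)%N.
Proof. by elim: N => [|N IH]; rewrite ?big_ord0 // big_ord_recr /= IH addn1. Qed.

Lemma count01 (R : realType) (Phi : (nat -> R) -> R) : is_snf Phi ->
  forall N x, is01 x -> (forall k, (N <= k)%N -> x k = 0) -> Phi x = normP Phi (cnt x N).
Proof.
move=> HP; elim=> [|N IH] x x01 xs.
  rewrite /cnt big_ord0 normP0 // -(Phi_cst0 HP); congr Phi; apply/funext => k; exact: xs.
have fx : finsupp x by exists N.+1.
have cS : cnt x N.+1 = (cnt x N + (x N != 0%R))%N by rewrite /cnt big_ord_recr.
case: (x01 N) => xN.
  rewrite cS xN eqxx addn0; apply: IH => // k; rewrite leq_eqVlt => /orP[/eqP<-|] //; exact: xs.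
case: (boolP [exists j : 'I_N, x j == 0%R]) => [/existsP[j /eqP xj]|].
  pose z k := x (sw j N k).
  have jN : (j < N)%N := ltn_ord j.
  have swN : sw j N N = j by rewrite /sw (gtn_eqF jN) eqxx.
  have z01 : is01 z by move=> k; exact: x01.
  have zs : forall k, (N <= k)%N -> z k = 0.
    move=> k; rewrite leq_eqVlt => /orP[/eqP<-|kN]; first by rewrite /z swN.
    rewrite /z /sw (gtn_eqF (ltn_trans jN kN)) (gtn_eqF kN); exact: xs.
  rewrite -(Phi_sw HP j N fx) -/z (IH z z01 zs).
  congr normP.
  have : cnt z N.+1 = cnt x N.+1.
    by rewrite /cnt /z (@sum_sw (fun i => (x i != 0):nat) N.+1 j N) // ltnS ltnW.
  by rewrite /cnt big_ord_recr /= -/(cnt z N) {2}/z swN xj eqxx addn0.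
rewrite negb_exists => /forallP xj.
have -> : x = ind R N.+1.
  apply/funext => k; rewrite /ind ltnS leq_eqVlt; case: ltngtP => kN /=.
  - have := xj (Ordinal kN); case: (x01 k) => -> //; by rewrite eqxx.
  - by rewrite xs.
  - by rewrite kN.
have -> : cnt (ind R N.+1) N.+1 = N.+1.
  rewrite /cnt -[RHS]sum1_ordn; apply: eq_bigr => i _.
  by rewrite /ind ltn_ord oner_eq0.
by [].
Qed.
Lemma trunc_fs (R : realType) (x : nat -> R) N : (forall k, (N <= k)%N -> x k = 0) ->
  forall n, (N <= n)%N -> trunc n x = x.
Proof.
move=> xs n Nn; apply/funext => k; rewrite /trunc; case: ltnP => // nk.
by rewrite xs // (leq_trans Nn nk).
Qed.

Lemma ext_fs (R : realType) (Phi : (nat -> R) -> R) x : finsupp x -> Phi_ext Phi x = Phi x.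
Proof.
move=> [N xs]; rewrite /Phi_ext; apply: cvg_lim => //; apply: cvg_near_cst.
by apply: filterS (nbhs_infty_ge N) => n /= Nn; rewrite (trunc_fs xs Nn).
Qed.

Lemma cPhi_fs (R : realType) (Phi : (nat -> R) -> R) x : finsupp x -> in_cPhi Phi x.
Proof.
move=> [N xs]; split.
  by apply: cvg_near_cst; apply: filterS (nbhs_infty_ge N) => n /= Nn; rewrite xs.
exists (\sum_(i < N.+1) `|Phi (trunc i x)|) => n.
have key : forall i : 'I_N.+1, Phi (trunc i x) <= \sum_(i < N.+1) `|Phi (trunc i x)|.
  move=> i; apply: le_trans (ler_norm _) _.
  rewrite (bigD1 i) //= lerDl; apply: sumr_ge0 => *; exact: normr_ge0.
case: (leqP n N) => nN.
  by have := key (Ordinal (nN : (n < N.+1)%N)).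
have := key ord_max; rewrite /= (trunc_fs xs (leqnn N)).
by rewrite (trunc_fs xs (ltnW nN)).
Qed.

Lemma snum_ind (R : realType) (Phi : (nat -> R) -> R) m : snum_seq Phi (ind R m).
Proof.
split; first by move=> k; rewrite /ind; case: ifP.
split; last exact/cPhi_fs/fs_ind.
move=> k; rewrite /ind; case: ifP => h; case: ifP => h' //.
by rewrite (ltnW h) in h'.
Qed.

Definition PP m n k := (((Cantor.of_nat k).1 < m) && ((Cantor.of_nat k).2 < n))%N.

Lemma tensor_ind (R : realType) m n k :
  seq_tensor (ind R m) (ind R n) k = if PP m n k then 1 else 0.
Proof.
rewrite /seq_tensor /ind /PP; case: ifP => h1; case: ifP => h2 /=;
  by rewrite ?mul1r ?mul0r.
Qed.

Lemma to_nat_lt m n a b : (a < m)%N -> (b < n)%N -> (Cantor.to_nat (a, b) < (m + n).+1 ^ 2)%N.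
Proof.
move=> am bn; have := Cantor.to_nat_spec a b.
set t := Cantor.to_nat _ => e.
have : (t * 2 < (m + n).+1 ^ 2 * 2)%N; last by rewrite ltn_pmul2r.
nia.
Qed.

Lemma PP_bound m n k : PP m n k -> (k < (m + n).+1 ^ 2)%N.
Proof.
rewrite /PP -{3}(Cantor.cancel_to_of k); case: (Cantor.of_nat k) => a b /= /andP[am bn].
exact: to_nat_lt.
Qed.

Lemma cnt_tensor (R : realType) m n :
  cnt (seq_tensor (ind R m) (ind R n)) ((m + n).+1 ^ 2) = (m * n)%N.
Proof.
set B := ((m + n).+1 ^ 2)%N.
have -> : cnt (seq_tensor (ind R m) (ind R n)) B = #|[set k : 'I_B | PP m n k]%SET|.
  rewrite -sum1_card big_mkcond /cnt; apply: eq_bigr => i _.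
  by rewrite tensor_ind inE; case: ifP => _; rewrite ?oner_eq0 ?eqxx.
pose f (p : 'I_m * 'I_n) : 'I_B := Ordinal (to_nat_lt (ltn_ord p.1) (ltn_ord p.2)).
have finj : injective f.
  move=> [a b] [c d] /(congr1 val) /= E.
  have := Cantor.to_nat_inj (val a, val b) (val c, val d) E; case => /val_inj -> /val_inj -> //.
have -> : [set k : 'I_B | PP m n k]%SET = (f @: [set: 'I_m * 'I_n])%SET.
  apply/setP => k; rewrite inE; apply/idP/imsetP.
    move=> /andP[am bn]; exists (Ordinal am, Ordinal bn) => //.
    apply: val_inj; change (val k = Cantor.to_nat ((Cantor.of_nat k).1, (Cantor.of_nat k).2)).
    by rewrite -surjective_pairing Cantor.cancel_to_of.
  by move=> [[a b] _ ->]; rewrite /PP (Cantor.cancel_of_to (val a, val b)) /= !ltn_ord.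
by rewrite card_imset // cardsT card_prod !card_ord.
Qed.

Lemma Phi_tensor (R : realType) (Phi : (nat -> R) -> R) : is_snf Phi -> forall m n,
  Phi (seq_tensor (ind R m) (ind R n)) = normP Phi (m * n).
Proof.
move=> HP m n; rewrite -(cnt_tensor R); apply: count01 => //.
  by move=> k; rewrite tensor_ind; case: ifP; [right|left].
move=> k Bk; rewrite tensor_ind; case: ifP => // /PP_bound.
by rewrite ltnNge Bk.
Qed.

Lemma fs_tensor (R : realType) m n : finsupp (seq_tensor (ind R m) (ind R n)).
Proof.
exists ((m + n).+1 ^ 2)%N => k Bk; rewrite tensor_ind; case: ifP => // /PP_bound.
by rewrite ltnNge Bk.
Qed.

Lemma star_mult (R : realType) (Phi : (nat -> R) -> R) : is_snf Phi -> cond_star Phi ->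
  exists c, 1 <= c /\ forall m n, normP Phi (m * n) <= c * normP Phi m * normP Phi n.
Proof.
move=> HP [c [c0 Hc]]; suff H : forall m n, normP Phi (m * n) <= c * normP Phi m * normP Phi n.
  exists c; split => //; have := H 1%N 1%N; by rewrite muln1 !normP1 // !mulr1.
move=> m n; have [_ ] := Hc _ _ (snum_ind Phi m) (snum_ind Phi n).
rewrite !ext_fs; try exact: fs_ind; try exact: fs_tensor; by rewrite (Phi_tensor HP).
Qed.

Lemma star2_mult (R : realType) (Phi : (nat -> R) -> R) : is_snf Phi -> cond_star2 Phi ->
  exists c, 0 < c /\ c <= 1 /\ forall m n, c * normP Phi m * normP Phi n <= normP Phi (m * n).
Proof.
move=> HP [c [c0 Hc]]; suff H : forall m n, c * normP Phi m * normP Phi n <= normP Phi (m * n).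
  exists c; split => //; split => //; have := H 1%N 1%N; by rewrite muln1 !normP1 // !mulr1.
move=> m n; have := Hc _ _ (snum_ind Phi m) (snum_ind Phi n) (cPhi_fs Phi (fs_tensor R m n)).
rewrite !ext_fs; try exact: fs_ind; try exact: fs_tensor; by rewrite (Phi_tensor HP).
Qed.
Lemma eventually_ex (P : nat -> Prop) : (\forall n \near \oo, P n) -> exists n, P n.
Proof. by move=> [N _ HN]; exists N; apply: HN => /=. Qed.

Lemma lemA (R : realType) (u g : nat -> R) (L : R) :
  (forall n, L <= u n) ->
  (forall k, (2 <= k)%N -> forall e, 0 < e -> \forall n \near \oo, u n <= g k + e) ->
  (forall e, 0 < e -> \forall n \near \oo, g n - e <= u n) ->
  exists l : R, u n @[n --> \oo] --> l.
Proof.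
move=> uL H1 H2.
pose G := [set g k | k in [set k | (2 <= k)%N]].
have G0 : G !=set0 by exists (g 2%N); exists 2%N.
have GL : lbound G L.
  move=> _ [k /= k2 <-]; apply/ler_addgt0Pr => e e0.
  have [n Hn] := eventually_ex (H1 k k2 e e0).
  exact: le_trans (uL n) Hn.
have hG : has_inf G by split => //; exists L.
exists (inf G); apply/cvgrPdist_le => e e0.
have e20 : 0 < e / 2 by rewrite divr_gt0.
have [_ [k /= k2 <-] gk] := inf_adherent e20 hG.
near=> n.
have h1 : u n <= g k + e / 2 by near: n; exact: H1.
have h2 : g n - e <= u n by near: n; exact: H2.
have h3 : (2 <= n)%N by near: n; exact: nbhs_infty_ge.
have h4 : inf G <= g n by apply: ge_inf; [exists L|exists n].
rewrite ler_distlC; apply/andP; split; lra.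
Unshelve. all: end_near.
Qed.
Lemma lnbig (R : realType) (M : R) : \forall n \near \oo, M <= ln (n%:R : R).
Proof.
apply: filterS (nbhs_infty_gtr (expR M)) => n h.
have n0 : 0 < (n%:R : R) by apply: lt_trans h; exact: expR_gt0.
rewrite -{1}(expRK M) ler_ln ?posrE ?expR_gt0 //; exact: ltW.
Qed.

Lemma small (R : realType) (Y e : R) : 0 < e -> \forall n \near \oo, Y / ln (n%:R : R) <= e.
Proof.
move=> e0; apply: filterS (lnbig (`|Y| / e + 1)) => n h.
have Ye : 0 <= `|Y| / e by rewrite divr_ge0 // ltW.
have A0 : 0 < ln (n%:R : R) by lra.
rewrite ler_pdivrMr //.
have E : `|Y| / e * e = `|Y| by rewrite divfK // gt_eqF.
have := ler_norm Y; nra.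
Qed.

Lemma powsub (R : realType) (w : nat -> R) (c : R) :
  (forall x y, (0 < x)%N -> (0 < y)%N -> w (x * y)%N <= w x + w y + c) ->
  forall k m, (0 < k)%N -> (0 < m)%N -> w (k ^ m)%N <= m%:R * (w k + c) - c.
Proof.
move=> sub k; elim=> [//|m IH] k0 _.
case: (posnP m) => [->|m0]; first by rewrite expn1 mul1r; lra.
have := IH k0 m0; rewrite expnSr => h.
have km : (0 < k ^ m)%N by rewrite expn_gt0 k0.
have := sub _ _ km k0.
rewrite -natr1 mulrDl mul1r; lra.
Qed.
Lemma lemC (R : realType) (w : nat -> R) (c L : R) : 0 <= c ->
  (forall x y, (0 < x)%N -> (0 < y)%N -> w (x * y)%N <= w x + w y + c) ->
  (forall k n, (2 <= k)%N -> (k <= n)%N -> exists2 m, (0 < m)%N &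
      `|m%:R * ln (k%:R : R) - ln (n%:R : R)| <= ln (k%:R : R) /\ w n <= w (k ^ m)%N) ->
  (forall n, L <= w n / ln (n%:R : R)) ->
  exists l : R, w n / ln (n%:R : R) @[n --> \oo] --> l.
Proof.
move=> c0 sub brk wL.
apply: (lemA (g := fun k => (w k + c) / ln (k%:R : R)) wL).
  move=> k k2 e e0.
  have K0 : 0 < ln (k%:R : R) by apply: ln_gt0; rewrite ltr1n.
  set K := ln (k%:R : R) in K0 *.
  set Y := w k + c.
  near=> n.
  have hs : `|Y| / ln (n%:R : R) <= e by near: n; exact: small.
  have kn : (k <= n)%N by near: n; exact: nbhs_infty_ge.
  have A0 : 0 < ln (n%:R : R).
    by apply: ln_gt0; rewrite ltr1n; apply: leq_trans kn.
  set A := ln (n%:R : R) in A0 hs *.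
  have [m m0 [hm hw]] := brk k n k2 kn.
  have hp := powsub sub (ltnW k2) m0.
  have wn : w n <= m%:R * Y by rewrite /Y; lra.
  have D : Y * (m%:R * K - A) <= `|Y| * K.
    apply: le_trans (ler_norm _) _; rewrite normrM; apply: ler_wpM2l => //.
  have key : m%:R * Y / A <= Y / K + `|Y| / A.
    rewrite -subr_le0.
    have -> : m%:R * Y / A - (Y / K + `|Y| / A) = (Y * (m%:R * K - A) - `|Y| * K) / (A * K).
      by field; apply/andP; split; rewrite gt_eqF.
    rewrite ler_pdivrMr ?mulr_gt0 // mul0r; lra.
  have : w n / A <= m%:R * Y / A by rewrite ler_pM2r ?invr_gt0.
  lra.
move=> e e0; near=> n.
have hs : c / ln (n%:R : R) <= e by near: n; exact: small.
rewrite mulrDl; lra.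
Unshelve. all: end_near.
Qed.
Lemma lnn_ge0 (R : realType) (n : nat) : 0 <= ln (n%:R : R).
Proof.
case: n => [|n]; first by rewrite ln0.
by apply: ln_ge0; rewrite ler1n.
Qed.

Lemma lnn_gt0 (R : realType) (n : nat) : (2 <= n)%N -> 0 < ln (n%:R : R).
Proof. by move=> n2; apply: ln_gt0; rewrite ltr1n. Qed.

Lemma lnnX (R : realType) (k j : nat) : (0 < k)%N -> ln ((k ^ j)%:R : R) = j%:R * ln (k%:R : R).
Proof. by move=> k0; rewrite natrX lnXn ?ltr0n // mulr_natl. Qed.

Lemma lnn_le (R : realType) (m n : nat) : (0 < m)%N -> (m <= n)%N -> ln (m%:R : R) <= ln (n%:R : R).
Proof.
move=> m0 mn; rewrite ler_ln ?posrE ?ltr0n ?ler_nat //; exact: leq_trans mn.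
Qed.

Section Main.
Lemma a_ge0 (R : realType) (Phi : (nat -> R) -> R) : is_snf Phi ->
  forall n, 0 <= ln (normP Phi n).
Proof.
move=> HP [|n]; first by rewrite normP0 // ln0.
by apply: ln_ge0; apply: normP_ge1.
Qed.

Lemma a_mono (R : realType) (Phi : (nat -> R) -> R) : is_snf Phi ->
  forall m n, (0 < m)%N -> (m <= n)%N -> ln (normP Phi m) <= ln (normP Phi n).
Proof.
move=> HP m n m0 mn; have h1 := normP_ge1 HP m0.
have h2 := normP_ge1 HP (leq_trans m0 mn).
rewrite ler_ln ?posrE; [exact: normP_mono| lra | lra].
Qed.

Lemma u_ge0 (R : realType) (Phi : (nat -> R) -> R) : is_snf Phi ->
  forall n, 0 <= ln (normP Phi n) / ln (n%:R : R).
Proof. by move=> HP n; rewrite divr_ge0 ?lnn_ge0 ?a_ge0. Qed.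

Lemma u_le1 (R : realType) (Phi : (nat -> R) -> R) : is_snf Phi ->
  forall n, ln (normP Phi n) / ln (n%:R : R) <= 1.
Proof.
move=> HP n; case: (leqP n 1) => n1.
  have -> : ln (n%:R : R) = 0.
    by move: n1; case: n => [|[|]] //= _; [rewrite ln0 | rewrite ln1].
  by rewrite (@invr0 R) mulr0.
rewrite ler_pdivrMr ?lnn_gt0 // mul1r.
have h1 := normP_ge1 HP (ltnW n1).
rewrite ler_ln ?posrE ?ltr0n ?normP_le //; [lra | exact: ltnW].
Qed.
End Main.
Lemma u_cvg (R : realType) (Phi : (nat -> R) -> R) : is_snf Phi ->
  cond_star Phi \/ cond_star2 Phi ->
  exists l : R, ln (normP Phi n) / ln (n%:R : R) @[n --> \oo] --> l.
Proof.
move=> HP [Hs|Hs].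
  have [c [c1 Hc]] := star_mult HP Hs.
  apply: (@lemC R (fun n => ln (normP Phi n)) (ln c) 0); first exact: ln_ge0.
  - move=> x y x0 y0 /=.
    have hx := normP_ge1 HP x0; have hy := normP_ge1 HP y0.
    have xy0 : (0 < x * y)%N by rewrite muln_gt0 x0 y0.
    have hxy := normP_ge1 HP xy0.
    rewrite -lnM ?posrE ?mulr_gt0 //; try lra.
    rewrite -lnM ?posrE ?mulr_gt0 //; try lra.
    rewrite ler_ln ?posrE ?mulr_gt0 //; try lra.
    by rewrite mulrC mulrA; apply: Hc.
  - move=> k n k2 kn; have k1 : (1 < k)%N := k2.
    have n0 : (0 < n)%N by apply: leq_trans (ltnW k2) kn.
    have k0 : (0 < k)%N by apply: ltnW.
    have := trunc_log_bounds k1 n0; set j := trunc_log k n => /andP[h1 h2].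
    exists j.+1 => //; split; last first.
      by apply: a_mono => //; exact: ltnW.
    have kj0 : (0 < k ^ j)%N by rewrite expn_gt0 k0.
    have l1 := lnn_le R kj0 h1.
    have l2 := lnn_le R n0 (ltnW h2).
    rewrite !lnnX // in l1 l2.
    rewrite ler_norml; rewrite -natr1 mulrDl mul1r in l2 *; apply/andP; split; lra.
  - by move=> n; apply: u_ge0.
have [c [c0 [c1 Hc]]] := star2_mult HP Hs.
have : exists l : R, - ln (normP Phi n) / ln (n%:R : R) @[n --> \oo] --> l.
  apply: (@lemC R (fun n => - ln (normP Phi n)) (- ln c) (-1)).
  - by rewrite oppr_ge0; apply: ln_le0.
  - move=> x y x0 y0 /=.
    have hx := normP_ge1 HP x0; have hy := normP_ge1 HP y0.
    have xy0 : (0 < x * y)%N by rewrite muln_gt0 x0 y0.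
    have hxy := normP_ge1 HP xy0.
    suff : ln c + ln (normP Phi x) + ln (normP Phi y) <= ln (normP Phi (x * y)) by lra.
    rewrite -lnM ?posrE ?mulr_gt0 //; try lra.
    rewrite -lnM ?posrE ?mulr_gt0 //; try lra.
    rewrite ler_ln ?posrE ?mulr_gt0 //; try lra.
  - move=> k n k2 kn; have k1 : (1 < k)%N := k2.
    have n0 : (0 < n)%N by apply: leq_trans (ltnW k2) kn.
    have k0 : (0 < k)%N by apply: ltnW.
    have := trunc_log_bounds k1 n0; set j := trunc_log k n => /andP[h1 h2].
    have j0 : (0 < j)%N by rewrite /j trunc_log_gt0 k1 /=; case: k {k1 k0 j h1 h2} k2 kn.
    have kj0 : (0 < k ^ j)%N by rewrite expn_gt0 k0.
    exists j => //; split; last first.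
      by rewrite lerN2; apply: a_mono.
    have l1 := lnn_le R kj0 h1.
    have l2 := lnn_le R n0 (ltnW h2).
    rewrite !lnnX // in l1 l2.
    rewrite ler_norml; rewrite -natr1 mulrDl mul1r in l2 *; apply/andP; split; lra.
  - by move=> n; rewrite mulNr lerN2; apply: u_le1.
move=> [l Hl]; exists (- l).
have -> : (fun n => ln (normP Phi n) / ln (n%:R : R)) = (fun n => - (- ln (normP Phi n) / ln (n%:R : R))).
  by apply/funext => n; rewrite mulNr opprK.
exact: cvgN Hl.
Qed.
Unset Implicit Arguments.
Theorem lemma5p1 (R : realType) (Phi : (nat -> R) -> R) :
  is_snf Phi -> cond_star Phi \/ cond_star2 Phi ->
  exists p : \bar R, (1%:E <= p)%E /\ pratio Phi n @[n --> \oo] --> p.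
Proof.
move=> HP Hs; have [l Hl] := u_cvg HP Hs.
set u := fun n => ln (normP Phi n) / ln (n%:R : R) in Hl.
have el : lim (u n @[n --> \oo]) = l by apply: cvg_lim.
have l0 : 0 <= l.
  rewrite -el; apply: limr_ge; first exact: cvgP Hl.
  by near=> n; apply: u_ge0.
have l1 : l <= 1.
  rewrite -el; apply: limr_le; first exact: cvgP Hl.
  by near=> n; apply: u_le1.
case: (eqVneq l 0) => [l_0|lneq0].
  exists +oo%E; split; first exact: leey.
  apply/cvgeyPge => A.
  set B := Num.max A 1.
  have B1 : 1 <= B by rewrite le_max lexx orbT.
  have B0 : 0 < B by lra.
  have Bi : 0 < B^-1 / 2 by rewrite divr_gt0 ?invr_gt0.
  have AB : A <= B by rewrite le_max lexx.
  move/cvgrPdist_le : Hl => /(_ _ Bi) Hl.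
  near=> n.
  have hn : `|l - u n| <= B^-1 / 2 by near: n; exact: Hl.
  have n2 : (2 <= n)%N by near: n; exact: nbhs_infty_ge.
  rewrite /pratio; case: eqP => [_|an0]; first exact: leey.
  rewrite lee_fin.
  have A0 := lnn_gt0 R n2.
  have a0 : 0 < ln (normP Phi n).
    by rewrite lt_neqAle eq_sym; apply/andP; split; [apply/eqP|apply: a_ge0].
  move: hn; rewrite l_0 ler_distlC => /andP[_].
  rewrite add0r /u => hu.
  have hu' : ln (normP Phi n) / ln (n%:R : R) < B^-1 by apply: le_lt_trans hu _; lra.
  rewrite ltr_pdivrMr // in hu'.
  rewrite ler_pdivlMr //.
  have : ln (normP Phi n) * B < ln (n%:R : R).
    have := hu'; rewrite -(ltr_pM2r B0) mulrAC mulVf ?gt_eqF // mul1r; lra.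
  nra.
exists (l^-1)%:E; split.
  rewrite lee_fin invf_ge1 //; rewrite lt_neqAle eq_sym lneq0; exact: l0.
have lp : 0 < l by rewrite lt_neqAle eq_sym lneq0.
have l2 : 0 < l / 2 by rewrite divr_gt0.
have Hl2 := Hl; move/cvgrPdist_le : Hl2 => /(_ _ l2) Hl2.
have E : \forall n \near \oo, ((u n)^-1)%:E = pratio Phi n.
  near=> n.
  have hn : `|l - u n| <= l / 2 by near: n; exact: Hl2.
  have n2 : (2 <= n)%N by near: n; exact: nbhs_infty_ge.
  move: hn; rewrite ler_distlC => /andP[hu _].
  have up : 0 < u n by lra.
  have an0 : ln (normP Phi n) != 0.
    by apply/eqP => e; move: up; rewrite /u e mul0r ltxx.
  by rewrite /pratio (negbTE an0) /u invf_div.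
apply: cvg_trans (near_eq_cvg E) _.
apply: cvg_EFin; first by near=> n.
exact: cvgV Hl.
Unshelve. all: end_near.
Qed.
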